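(* Let $L=\{<,\ldots\}$ be a countable first order language containing a binary relation symbol $<$, and let $T$ be a complete $L$-theory with Skolem functions in which $<$ is interpreted as a linear order. Suppose $T$ satisfies the inaccessibility scheme. Let $M\models T$, let $\psi(\bar{x},\bar{t})$ be an $L$-formula and $\bar{b}\in M$ with $|\bar{b}|=|\bar{t}|$ such that $\psi(\bar{x},\bar{b})$ is $\bar{x}$-unbounded in $M$. Let $\varphi(\bar{x},\bar{t}')$ be an $L$-formula and $a\in M$. Then there is a tuple $\bar{c}\in M$ with $|\bar{c}|=|\bar{x}|$ such that $E_{\varphi}(\bar{x},\bar{c};a)\wedge\psi(\bar{x},\bar{b})$ is $\bar{x}$-unbounded in $M$.
   Context: For a formula $\varphi(\bar{x},\bar{t})$ and tuples $\bar{y}_0,\bar{y}_1$ of the same length as $\bar{x}$, write $E_{\varphi}(\bar{y}_0,\bar{y}_1;z_0)$ for the formula $(\forall \bar{t}<z_0)(\varphi(\bar{y}_0,\bar{t})\leftrightarrow\varphi(\bar{y}_1,\bar{t}))$; here $\bar{t}<z_0$ means every coordinate of $\bar{t}$ is $<z_0$. $T$ satisfies the inaccessibility scheme if for every formula $\varphi(\bar{x},\bar{t})$ of $L$ (with $\bar{x}$ a tuple of any finite length), $T\models (\forall z_0)(\exists z_1>z_0)(\forall\bar{y}_0)(\exists\bar{y}_1<z_1)E_{\varphi}(\bar{y}_0,\bar{y}_1;z_0)$. ''$T$ has Skolem functions'' means that for every formula $\theta(y,\bar{x})$ there is a term $\tau(\bar{x})$ of $L$ with $T\models \forall\bar{x}(\exists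 y\,\theta(y,\bar{x})\to\theta(\tau(\bar{x}),\bar{x}))$. For $\bar{x}=(x_1,\ldots,x_n)$ and a formula $\chi(\bar{x})$ with parameters from $M$, $\chi(\bar{x})$ is $\bar{x}$-unbounded in $M$ if $M\models(\forall\alpha_1)(\exists x_1>\alpha_1)(\forall\alpha_2)(\exists x_2>\alpha_2)\cdots(\forall\alpha_n)(\exists x_n>\alpha_n)\chi(\bar{x})$; otherwise it is $\bar{x}$-bounded. *)

(* Defs.v *)
From Stdlib Require Lists.List.
From mathcomp Require Import all_boot.
Set Implicit Arguments. Unset Strict Implicit. Unset Printing Implicit Defensive.

Record language := Language {
  funs : countType;            (* function symbols (constants have arity 0) *)
  rels : countType;
  fun_ar : funs -> nat;
  rel_ar : rels -> nat;
  ltR : rels;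
  ltR_ar : rel_ar ltR = 2 }.

Section FOL.
Variable L : language.

Inductive term : Type :=
| Var : nat -> term
| App : forall f : funs L, ('I_(fun_ar f) -> term) -> term.

(* Formulas; quantifiers bind a named variable. *)
Inductive formula : Type :=
| Fal : formula
| Eq : term -> term -> formula
| Rel : forall r : rels L, ('I_(rel_ar r) -> term) -> formula
| Not : formula -> formula
| And : formula -> formula -> formula
| Or : formula -> formula -> formula
| Imp : formula -> formula -> formula
| All : nat -> formula -> formula
| Ex : nat -> formula -> formula.

Fixpoint occurs (v : nat) (t : term) : Prop :=
  match t with
  | Var w => w = v
  | App f args => exists i, occurs v (args i)
  end.

Fixpoint free (v : nat) (p : formula) : Prop :=
  match p with
  | Fal => False
  | Eq t1 t2 => occurs v t1 \/ occurs v t2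
  | Rel r args => exists i, occurs v (args i)
  | Not q => free v q
  | And q1 q2 | Or q1 q2 | Imp q1 q2 => free v q1 \/ free v q2
  | All w q | Ex w q => v <> w /\ free v q
  end.

Definition sentence (p : formula) : Prop := forall v, ~ free v p.

Definition fv_below (p : formula) (m : nat) : Prop := forall v, free v p -> v < m.

Record structure := Structure {
  carrier :> Type;
  inhab : carrier;
  fint : forall f : funs L, ('I_(fun_ar f) -> carrier) -> carrier;
  rint : forall r : rels L, ('I_(rel_ar r) -> carrier) -> Prop }.

Section Semantics.
Variable M : structure.

Fixpoint eval (e : nat -> M) (t : term) : M :=
  match t with
  | Var v => e v
  | App f args => fint (fun i => eval e (args i))
  end.

Definition upd (e : nat -> M) (v : nat) (m : M) : nat -> M :=
  fun w => if w == v then m else e w.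

Fixpoint sat (e : nat -> M) (p : formula) : Prop :=
  match p with
  | Fal => False
  | Eq t1 t2 => eval e t1 = eval e t2
  | Rel r args => rint (fun i => eval e (args i))
  | Not q => ~ sat e q
  | And q1 q2 => sat e q1 /\ sat e q2
  | Or q1 q2 => sat e q1 \/ sat e q2
  | Imp q1 q2 => sat e q1 -> sat e q2
  | All v q => forall m, sat (upd e v m) q
  | Ex v q => exists m, sat (upd e v m) q
  end.

Definition ltM (x y : M) : Prop :=
  rint (fun i : 'I_(rel_ar (ltR L)) => if val i == 0 then x else y).

Definition env_of (s : seq M) : nat -> M := fun i => nth (inhab M) s i.

(* E_phi(y0, y1; z0) for phi(x, t) with |x| = |y0| = |y1| and |t| = k:
   variables 0..|x|-1 of phi are x, the next k are t. *)
Definition E_phi (phi : formula) (k : nat) (y0 y1 : seq M) (z0 : M) : Prop :=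
  forall ts : seq M, size ts = k -> Stdlib.Lists.List.Forall (fun t => ltM t z0) ts ->
    (sat (env_of (y0 ++ ts)) phi <-> sat (env_of (y1 ++ ts)) phi).

(* chi(x1..xn) (given as a predicate on n-element lists) is x-unbounded:
   forall a1, exists x1 > a1, forall a2, exists x2 > a2, ..., chi(x1,...,xn) *)
Fixpoint unbounded (n : nat) (chi : seq M -> Prop) : Prop :=
  match n with
  | 0 => chi [::]
  | n'.+1 => forall alpha : M, exists x : M, ltM alpha x /\
               unbounded n' (fun s => chi (x :: s))
  end.

End Semantics.

Definition theory := formula -> Prop.

Definition models (M : structure) (T : theory) : Prop :=
  forall p, T p -> forall e : nat -> M, sat e p.

Definition entails (T : theory) (p : formula) : Prop :=
  forall M : structure, models M T -> forall e : nat -> M, sat e p.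

Definition theory_of_sentences (T : theory) : Prop := forall p, T p -> sentence p.

Definition complete (T : theory) : Prop :=
  (exists M : structure, models M T) /\
  forall p, sentence p -> entails T p \/ entails T (Not p).

Definition has_skolem (T : theory) : Prop :=
  forall (theta : formula) (y : nat), exists tau : term, ~ occurs y tau /\
    forall M : structure, models M T -> forall e : nat -> M,
      (exists m, sat (upd e y m) theta) -> sat (upd e y (eval e tau)) theta.

Definition lin_order_theory (T : theory) : Prop :=
  forall M : structure, models M T ->
    (forall x : M, ~ ltM x x) /\
    (forall x y z : M, ltM x y -> ltM y z -> ltM x z) /\
    (forall x y : M, ltM x y \/ x = y \/ ltM y x).

Definition inaccessibility (T : theory) : Prop :=
  forall (n k : nat) (phi : formula), fv_below phi (n + k) ->
    forall M : structure, models M T ->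
      forall z0 : M, exists z1 : M, ltM z0 z1 /\
        forall y0 : seq M, size y0 = n ->
          exists y1 : seq M, size y1 = n /\ Stdlib.Lists.List.Forall (fun y => ltM y z1) y1 /\
            E_phi phi k y0 y1 z0.

End FOL.

(* Main.v *)
Require Import Defs.
From mathcomp Require Import all_boot zify.
From Stdlib Require Import FunctionalExtensionality Classical.
Set Implicit Arguments. Unset Strict Implicit. Unset Printing Implicit Defensive.


Lemma eval_agree {L : language} {M : structure L} (t : term L) (e1 e2 : nat -> M) :
  (forall v, occurs v t -> e1 v = e2 v) -> eval e1 t = eval e2 t.
Proof.
elim: t => [v|f args IH] H /=; first by apply: H.
congr fint; apply: functional_extensionality => i; apply: IH => v Hv; apply: H; by exists i.
Qed.

Lemma sat_agree {L : language} {M : structure L} (q : formula L) : forall (e1 e2 : nat -> M),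
  (forall v, free v q -> e1 v = e2 v) -> (sat e1 q <-> sat e2 q).
Proof.
elim: q => [|t1 t2|r args|q IH|q1 IH1 q2 IH2|q1 IH1 q2 IH2|q1 IH1 q2 IH2|w q IH|w q IH] e1 e2 H /=.
- by [].
- rewrite (@eval_agree _ _ t1 e1 e2); last by move=> v Hv; apply: H; left.
  rewrite (@eval_agree _ _ t2 e1 e2) //; by move=> v Hv; apply: H; right.
- have -> : (fun i => eval e1 (args i)) = (fun i => eval e2 (args i)); last by [].
  apply: functional_extensionality => i; apply: eval_agree => v Hv; apply: H; by exists i.
- by rewrite (IH e1 e2 H).
- by rewrite (IH1 e1 e2) ?(IH2 e1 e2) // => v Hv; apply: H; [right|left].
- by rewrite (IH1 e1 e2) ?(IH2 e1 e2) // => v Hv; apply: H; [right|left].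
- by rewrite (IH1 e1 e2) ?(IH2 e1 e2) // => v Hv; apply: H; [right|left].
- split=> Hm m; [rewrite -(IH (upd e1 w m))|rewrite (IH (upd e1 w m) (upd e2 w m))] => // v Hv;
  rewrite /upd; case: eqP => // /eqP Hne; apply: H; split=> //; exact/eqP.
- split=> -[m Hm]; exists m; [rewrite -(IH (upd e1 w m))|rewrite (IH (upd e1 w m) (upd e2 w m))] => // v Hv;
  rewrite /upd; case: eqP => // /eqP Hne; apply: H; split=> //; exact/eqP.
Qed.

Lemma sat_ext {L : language} {M : structure L} (q : formula L) (e1 e2 : nat -> M) :
  (forall v, e1 v = e2 v) -> (sat e1 q <-> sat e2 q).
Proof. by move=> H; apply: sat_agree. Qed.

Lemma fin_bound n (P : 'I_n -> nat -> Prop) :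
  (forall o m m', m <= m' -> P o m -> P o m') -> (forall o, exists m, P o m) ->
  exists m, forall o, P o m.
Proof.
move=> Hmon H.
have: forall l : seq 'I_n, exists m, forall o, o \in l -> P o m.
  elim=> [|o l [m Hm]]; first by exists 0.
  have [m' Hm'] := H o; exists (maxn m m') => o'; rewrite inE => /orP[/eqP->|Ho'].
  - by apply: Hmon Hm'; rewrite leq_maxr.
  - by apply: Hmon (Hm _ Ho'); rewrite leq_maxl.
move=> /(_ (enum 'I_n)) [m Hm]; exists m => o; apply: Hm; by rewrite mem_enum.
Qed.

Lemma term_bound {L : language} (t : term L) : exists m, forall v, occurs v t -> v < m.
Proof.
elim: t => [v|f args IH]; first by exists v.+1 => w /= ->.
have [m Hm] := fin_bound (P := fun o m => forall v, occurs v (args o) -> v < m)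
   (fun o m m' Hle H v Hv => leq_trans (H v Hv) Hle) IH.
exists m => v /= [i Hi]; exact: Hm Hi.
Qed.

Lemma fv_bound {L : language} (q : formula L) : exists m, fv_below q m.
Proof.
rewrite /fv_below.
elim: q => [|t1 t2|r args|q IH|q1 [m1 H1] q2 [m2 H2]|q1 [m1 H1] q2 [m2 H2]|q1 [m1 H1] q2 [m2 H2]|w q [m H]|w q [m H]].
- by exists 0.
- have [m1 H1] := term_bound t1; have [m2 H2] := term_bound t2.
  exists (maxn m1 m2) => v /= [Hv|Hv]; rewrite leq_max; [rewrite H1 | rewrite H2 ?orbT] => //.
- have [m Hm] := fin_bound (P := fun o m => forall v, occurs v (args o) -> v < m)
   (fun o m m' Hle H v Hv => leq_trans (H v Hv) Hle) (fun o => term_bound (args o)).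
  exists m => v /= [i Hi]; exact: Hm Hi.
- exact: IH.
all: try (exists (maxn m1 m2) => v /= [Hv|Hv]; rewrite leq_max; [rewrite H1 | rewrite H2 ?orbT] => //).
all: by exists m => v /= [_ Hv]; apply: H.
Qed.


Fixpoint upds {L : language} {M : structure L} (e : nat -> M) (vs : seq nat) (ms : seq M) : nat -> M :=
  match vs, ms with
  | v :: vs', m :: ms' => upds (upd e v m) vs' ms'
  | _, _ => e
  end.

Lemma upds_out {L : language} {M : structure L} vs : forall (e : nat -> M) ms v,
  v \notin vs -> upds e vs ms v = e v.
Proof.
elim: vs => [|w vs IH] e [|m ms] v //= Hv.
rewrite inE negb_or in Hv; case/andP: Hv => Hvw Hv.
by rewrite IH // /upd (negbTE Hvw).
Qed.

Lemma upds_map {L : language} {M : structure L} vs : forall (e : nat -> M) ms,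
  uniq vs -> size ms = size vs -> map (upds e vs ms) vs = ms.
Proof.
elim: vs => [|w vs IH] e [|m ms] //= /andP[Hw Hu] [Hs].
by rewrite IH // upds_out // /upd eqxx.
Qed.

Lemma upds_agree {L : language} {M : structure L} vs : forall (e1 e2 : nat -> M) ms A,
  (forall w, w != A -> e1 w = e2 w) -> forall w, w != A -> upds e1 vs ms w = upds e2 vs ms w.
Proof.
elim: vs => [|v vs IH] e1 e2 [|m ms] A H w Hw //=; try by apply: H.
apply: IH Hw => u Hu; rewrite /upd; case: eqP => //; by rewrite H.
Qed.

Lemma sat_ext_imp {L : language} {M : structure L} (q : formula L) (e1 e2 : nat -> M) :
  sat e1 q -> (forall v, e1 v = e2 v) -> sat e2 q.
Proof. by move=> H1 H; apply: (proj1 (sat_ext q H)). Qed.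

Fixpoint rb {L : language} (lo : nat) (s : seq nat) (q : formula L) : formula L :=
  match s with
  | [::] => q
  | w :: s' => All lo (Imp (Eq (Var L lo) (Var L w)) (rb lo.+1 s' q))
  end.

Lemma rb_pt {L : language} {M : structure L} (e : nat -> M) lo w s v :
  (forall w', w' \in s -> w' != lo) ->
  (if (lo < v) && (v < lo.+1 + size s) then upd e lo (e w) (nth 0 s (v - lo.+1)) else upd e lo (e w) v) =
  (if (lo <= v) && (v < lo + (size s).+1) then e (nth 0 (w :: s) (v - lo)) else e v).
Proof.
move=> H.
case: (ltngtP v lo) => Hv.
- rewrite /= /upd; case: eqP => //; lia.
- have E: v - lo = (v - lo.+1).+1 by lia.
  rewrite E /=.
  have -> : (v < lo + (size s).+1) = (v < lo.+1 + size s) by lia.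
  case: ifP => Hc.
  + rewrite /upd. have Hin : nth 0 s (v - lo.+1) \in s by apply: mem_nth; rewrite ltn_subLR.
    by rewrite (negbTE (H _ Hin)).
  + rewrite /upd ifF //; lia.
- subst v; rewrite /= subnn addnS ltnS leq_addr /=. by rewrite /upd eqxx.
Qed.

Lemma rb_sem {L : language} {M : structure L} (q : formula L) s : forall lo (e : nat -> M),
  (forall w, w \in s -> ~~ ((lo <= w) && (w < lo + size s))) ->
  (sat e (rb lo s q) <->
   sat (fun v => if (lo <= v) && (v < lo + size s) then e (nth 0 s (v - lo)) else e v) q).
Proof.
elim: s => [|w s IH] lo e Hs /=.
  by apply: sat_ext => v; case: ifP => //; lia.
have Hwlo : w != lo.
  by apply/eqP => Hw; move: (Hs w (mem_head _ _)); rewrite Hw /=; lia.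
have Hupd : forall m, upd e lo m w = e w by move=> m; rewrite /upd (negbTE Hwlo).
have Hs' : forall w', w' \in s -> ~~ ((lo.+1 <= w') && (w' < lo.+1 + size s)).
  move=> w' Hw'; move: (Hs w' (mem_behead (s:=w::s) Hw')) => /=; lia.
have Hs'' : forall w', w' \in s -> w' != lo.
  move=> w' Hw'; move: (Hs w' (mem_behead (s:=w::s) Hw')) => /=.
  by apply: contra => /eqP ->; lia.
have Hlo : forall m, upd e lo m lo = m by move=> m; rewrite /upd eqxx.
split.
- move=> H; move: (H (e w)); rewrite /= Hlo Hupd => /(_ erefl).
  rewrite IH // => H'; apply: (sat_ext_imp H') => v; exact: rb_pt.
- move=> H m /=; rewrite Hlo Hupd => ->.
  rewrite IH //; apply: (sat_ext_imp H) => v; symmetry; exact: rb_pt.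
Qed.


Lemma rb0_sem {L : language} {M : structure L} (q : formula L) (s : seq nat) (e : nat -> M) :
  fv_below q (size s) -> (forall w, w \in s -> size s <= w) ->
  (sat e (rb 0 s q) <-> sat (env_of (map e s)) q).
Proof.
move=> Hq Hs; rewrite rb_sem; last by move=> w /Hs; rewrite add0n ltnNge => ->; rewrite andbF.
apply: sat_agree => v /Hq Hv /=.
rewrite Hv subn0 /env_of (nth_map 0) //.
Qed.

Definition ltF {L : language} (u v : nat) : formula L :=
  @Rel L (ltR L) (fun i => if val i == 0 then Var L u else Var L v).

Lemma satImp {L : language} {M : structure L} (e : nat -> M) a b : sat e (Imp a b) = (sat e a -> sat e b).
Proof. by []. Qed.
Lemma satAnd {L : language} {M : structure L} (e : nat -> M) a b : sat e (And a b) = (sat e a /\ sat e b).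
Proof. by []. Qed.
Lemma satAll {L : language} {M : structure L} (e : nat -> M) v a : sat e (All v a) = (forall m, sat (upd e v m) a).
Proof. by []. Qed.
Lemma satEx {L : language} {M : structure L} (e : nat -> M) v a : sat e (Ex v a) = (exists m, sat (upd e v m) a).
Proof. by []. Qed.

Lemma ltF_sem {L : language} {M : structure L} (e : nat -> M) u v :
  sat e (ltF u v) <-> ltM (e u) (e v).
Proof.
rewrite /ltF /= /ltM.
have -> : (fun i : 'I_(rel_ar (ltR L)) => eval e (if val i == 0 then Var L u else Var L v))
  = (fun i => if val i == 0 then e u else e v); last by [].
by apply: functional_extensionality => i; case: ifP.
Qed.

Fixpoint allLt {L : language} (ts : seq nat) (av : nat) (q : formula L) : formula L :=
  match ts with
  | [::] => q
  | t :: ts' => All t (Imp (ltF t av) (allLt ts' av q))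
  end.

Lemma allLt_sem {L : language} {M : structure L} (q : formula L) ts av : forall (e : nat -> M),
  av \notin ts ->
  (sat e (allLt ts av q) <-> forall ms, size ms = size ts ->
     List.Forall (fun m => ltM m (e av)) ms -> sat (upds e ts ms) q).
Proof.
elim: ts => [|t ts IH] e Hav.
  split; first by move=> H [|m ms]. by move=> H; apply: (H [::]).
rewrite [allLt (t :: ts) _ _]/= satAll.
rewrite inE negb_or in Hav; case/andP: Hav => Hat Hav.
have Hu : forall m, upd e t m av = e av by move=> m; rewrite /upd (negbTE Hat).
have Ht : forall m, upd e t m t = m by move=> m; rewrite /upd eqxx.
split.
- move=> H [|m ms] // [Hs] HF; inversion HF; subst.
  move: (H m); rewrite satImp ltF_sem Ht Hu => /(_ H2).
  rewrite IH // => H'; apply: H' => //; by rewrite Hu.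
- move=> H m; rewrite satImp ltF_sem Ht Hu => Hm.
  rewrite IH // => ms Hs HF; apply: (H (m :: ms)) => /=; first by rewrite Hs.
  by constructor => //; rewrite -(Hu m).
Qed.

Fixpoint ublock {L : language} (A : nat) (vs : seq nat) (body : formula L) : formula L :=
  match vs with
  | [::] => body
  | v :: vs' => All A (Ex v (And (ltF A v) (ublock A vs' body)))
  end.

Lemma unbounded_ext {L : language} {M : structure L} j : forall (P Q : seq M -> Prop),
  (forall s, size s = j -> (P s <-> Q s)) -> (unbounded j P <-> unbounded j Q).
Proof.
elim: j => [|j IH] P Q H /=; first exact: H.
split=> H1 alpha; have [x [Hx Hu]] := H1 alpha; exists x; split=> //.
- by rewrite -(IH (fun s => P (x :: s))) // => s Hs; apply: H; rewrite /= Hs.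
- by rewrite (IH _ (fun s => Q (x :: s))) // => s Hs; apply: H; rewrite /= Hs.
Qed.

Lemma unbounded_imp {L : language} {M : structure L} j (P Q : seq M -> Prop) :
  unbounded j P -> (forall s, size s = j -> (P s <-> Q s)) -> unbounded j Q.
Proof. by move=> H1 H; apply/(proj1 (unbounded_ext H)). Qed.

Lemma ublock_sem {L : language} {M : structure L} (body : formula L) A vs : forall (e : nat -> M),
  A \notin vs ->
  (forall e1 e2 : nat -> M, (forall w, w != A -> e1 w = e2 w) -> (sat e1 body <-> sat e2 body)) ->
  (sat e (ublock A vs body) <-> unbounded (size vs) (fun s => sat (upds e vs s) body)).
Proof.
elim: vs => [|v vs IH] e HA Hb; first by [].
rewrite [ublock _ (v :: vs) _]/= satAll.
rewrite inE negb_or in HA; case/andP: HA => HAv HA.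
have Hv : forall a x, upd (upd e A a) v x A = a.
  by move=> a x; rewrite /upd (negbTE HAv) eqxx.
have Hx : forall a x, upd (upd e A a) v x v = x by move=> a x; rewrite /upd eqxx.
have Hag : forall a x s, sat (upds (upd (upd e A a) v x) vs s) body <-> sat (upds (upd e v x) vs s) body.
  move=> a x s; apply: Hb; apply: upds_agree => w Hw.
  by rewrite /upd; case: eqP => // _; rewrite (negbTE Hw).
split=> H a.
- move: (H a); rewrite satEx => -[x]; rewrite satAnd ltF_sem Hv Hx => -[H1 H2].
  exists x; split=> //.
  move: H2; rewrite IH // => H2.
  by apply: (unbounded_imp H2) => s _; rewrite Hag.
- have [x [H1 H2]] := H a; rewrite satEx; exists x; rewrite satAnd ltF_sem Hv Hx; split=> //.
  rewrite IH //; by apply: (unbounded_imp H2) => s _; rewrite Hag.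
Qed.


Definition Iff {L : language} (a b : formula L) := And (Imp a b) (Imp b a).

Lemma Iff_sem {L : language} {M : structure L} (e : nat -> M) a b :
  sat e (Iff a b) <-> (sat e a <-> sat e b).
Proof. by []. Qed.

Lemma upds_map_out {L : language} {M : structure L} (e : nat -> M) vs ms s :
  (forall w, w \in s -> w \notin vs) -> map (upds e vs ms) s = map e s.
Proof. by move=> H; apply/eq_in_map => w /H; apply: upds_out. Qed.

Definition bodyF {L : language} (phi psi : formula L) (n k k' PC PA PB PX PT : nat) : formula L :=
  And (allLt (iota PT k') PA (Iff (rb 0 (iota PX n ++ iota PT k') phi) (rb 0 (iota PC n ++ iota PT k') phi)))
      (rb 0 (iota PX n ++ iota PB k) psi).

Lemma body_sem {L : language} {M : structure L} (phi psi : formula L) (n k k' PC PA PB PX PT : nat) (e : nat -> M) :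
  fv_below phi (n + k') -> fv_below psi (n + k) ->
  n + k + k' <= PC -> PC + n <= PA -> PA < PB -> PB + k <= PX -> PX + n <= PT ->
  (sat e (bodyF phi psi n k k' PC PA PB PX PT) <->
   E_phi phi k' (map e (iota PX n)) (map e (iota PC n)) (e PA) /\
   sat (env_of (map e (iota PX n) ++ map e (iota PB k))) psi).
Proof.
move=> Hphi Hpsi H1 H2 H3 H4 H5.
rewrite /bodyF satAnd rb0_sem; first last.
- move=> w; rewrite mem_cat !mem_iota size_cat !size_iota; lia.
- by rewrite size_cat !size_iota.
rewrite !map_cat.
suff -> : sat e (allLt (iota PT k') PA (Iff (rb 0 (iota PX n ++ iota PT k') phi) (rb 0 (iota PC n ++ iota PT k') phi)))
  <-> E_phi phi k' (map e (iota PX n)) (map e (iota PC n)) (e PA) by [].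
rewrite allLt_sem; last by rewrite mem_iota; lia.
rewrite size_iota /E_phi; split=> H ts Hs HF.
- move: (H ts Hs HF); rewrite Iff_sem !rb0_sem; first last.
  + move=> w; rewrite mem_cat !mem_iota size_cat !size_iota; lia.
  + by rewrite size_cat !size_iota.
  + move=> w; rewrite mem_cat !mem_iota size_cat !size_iota; lia.
  + by rewrite size_cat !size_iota.
  rewrite !map_cat upds_map ?iota_uniq ?size_iota //.
  rewrite !upds_map_out //.
  + move=> w; rewrite !mem_iota; lia.
  + move=> w; rewrite !mem_iota; lia.
- rewrite Iff_sem !rb0_sem; first last.
  + move=> w; rewrite mem_cat !mem_iota size_cat !size_iota; lia.
  + by rewrite size_cat !size_iota.
  + move=> w; rewrite mem_cat !mem_iota size_cat !size_iota; lia.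
  + by rewrite size_cat !size_iota.
  rewrite !map_cat upds_map ?iota_uniq ?size_iota //.
  rewrite !upds_map_out //; first exact: H.
  + move=> w; rewrite !mem_iota; lia.
  + move=> w; rewrite !mem_iota; lia.
Qed.


Definition Theta {L : language} (phi psi : formula L) (n k k' plen j : nat) : formula L :=
  let Kt := n + k + plen + 2 in
  let N := Kt + n + k + k' + 1 in
  let PC := N.+1 in let PA := PC + n in let PB := PA.+1 in let PX := PB + k in
  let PT := PX + n in let Aal := PT + k' in let Xp := PX + plen in
  rb N (iota 0 Kt) (Ex Xp (And (ltF N Xp) (ublock Aal (iota Xp.+1 j) (bodyF phi psi n k k' PC PA PB PX PT)))).

Lemma region {L : language} {M : structure L} (e0 : nat -> M) (L0 : seq M) N Kt o len P :
  (forall i, i < Kt -> e0 (N + i) = nth (inhab M) L0 i) -> o + len <= Kt -> Kt <= size L0 -> P = N + o ->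
  map e0 (iota P len) = take len (drop o L0).
Proof.
move=> He Hl HK ->; rewrite iotaDl -map_comp.
rewrite -(map_nth_iota (inhab M)); last by lia.
apply/eq_in_map => i; rewrite mem_iota => Hi /=; apply: He; lia.
Qed.

Lemma Theta_sem {L : language} {M : structure L} (phi psi : formula L) (n k k' plen j : nat)
  (y a : M) (c b p fill : seq M) :
  fv_below phi (n + k') -> fv_below psi (n + k) ->
  plen + j.+1 = n -> size c = n -> size b = k -> size p = plen ->
  (sat (env_of (y :: c ++ a :: b ++ p ++ fill)) (Theta phi psi n k k' plen j) <->
   exists x, ltM y x /\ unbounded j (fun s => E_phi phi k' (p ++ x :: s) c a /\
                                               sat (env_of ((p ++ x :: s) ++ b)) psi)).
Proof.
move=> Hphi Hpsi Hn Hc Hb Hp.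
set L0 := y :: c ++ a :: b ++ p ++ fill.
rewrite /Theta.
remember (n + k + plen + 2) as Kt eqn:eKt.
remember (Kt + n + k + k' + 1) as N eqn:eN.
remember (N.+1) as PC eqn:ePC.
remember (PC + n) as PA eqn:ePA.
remember (PA.+1) as PB eqn:ePB.
remember (PB + k) as PX eqn:ePX.
remember (PX + n) as PT eqn:ePT.
remember (PT + k') as Aal eqn:eAal.
remember (PX + plen) as Xp eqn:eXp.
have HL0 : Kt <= size L0 by rewrite /L0 /= size_cat /= size_cat size_cat; lia.
rewrite rb_sem; last by move=> w; rewrite mem_iota size_iota; lia.
set e0 := (fun v => _).
have He0 : forall i, i < Kt -> e0 (N + i) = nth (inhab M) L0 i.
  move=> i Hi; rewrite /e0 size_iota ifT; last lia.
  by rewrite /env_of nth_iota; [congr nth; lia | lia].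
have Hy : e0 N = y by move: (He0 0); rewrite addn0 => -> //; lia.
have HcR : map e0 (iota PC n) = c.
  rewrite (region He0 (o := 1)) //; [|lia|lia].
  by rewrite /L0 /= drop0 take_size_cat.
have HaR : e0 PA = a.
  have -> : PA = N + n.+1 by lia.
  rewrite He0; last lia.
  by rewrite /L0 /= nth_cat Hc ltnn subnn.
have HD : drop n.+2 L0 = b ++ p ++ fill.
  by rewrite /L0 /= drop_cat Hc ltnNge leqnSn /= subSnn /= drop0.
have HbR : map e0 (iota PB k) = b.
  rewrite (region He0 (o := n.+2)) //; [|lia|lia].
  by rewrite HD take_size_cat.
have HpR : map e0 (iota PX plen) = p.
  rewrite (region He0 (o := n.+2 + k)) //; [|lia|lia].
  by rewrite addnC -drop_drop HD drop_size_cat // take_size_cat.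
have Hbody : forall e : nat -> M, sat e (bodyF phi psi n k k' PC PA PB PX PT) <->
   E_phi phi k' (map e (iota PX n)) (map e (iota PC n)) (e PA) /\
   sat (env_of (map e (iota PX n) ++ map e (iota PB k))) psi.
  move=> e; apply: body_sem => //; lia.
have upd_map_out : forall (e : nat -> M) v m s, v \notin s -> map (upd e v m) s = map e s.
  move=> e v m s0 Hv; apply/eq_in_map => w Hw; rewrite /upd ifF //.
  by apply/eqP => Hwv; move: Hv; rewrite -Hwv Hw.
have HB : forall x s, size s = j ->
  (sat (upds (upd e0 Xp x) (iota Xp.+1 j) s) (bodyF phi psi n k k' PC PA PB PX PT) <->
   E_phi phi k' (p ++ x :: s) c a /\ sat (env_of ((p ++ x :: s) ++ b)) psi).
  move=> x s Hs; rewrite Hbody.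
  have HX : map (upds (upd e0 Xp x) (iota Xp.+1 j) s) (iota PX n) = p ++ x :: s.
    rewrite -Hn iotaD /= map_cat /= -eXp.
    rewrite upds_map_out; last by move=> w; rewrite !mem_iota; lia.
    rewrite upd_map_out; last by rewrite mem_iota; lia.
    rewrite HpR upds_out; last by rewrite mem_iota; lia.
    rewrite /upd eqxx -/(upd e0 Xp x) upds_map ?iota_uniq ?size_iota //.
  rewrite HX upds_map_out; last by move=> w; rewrite !mem_iota; lia.
  rewrite upd_map_out; last by rewrite mem_iota; lia.
  rewrite HcR upds_out; last by rewrite mem_iota; lia.
  rewrite /upd ifF; last by apply/eqP; lia.
  rewrite -/(upd e0 Xp x) HaR.
  rewrite upds_map_out; last by move=> w; rewrite !mem_iota; lia.
  rewrite upd_map_out; last by rewrite mem_iota; lia.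
  by rewrite HbR.
have Hind : forall e1 e2 : nat -> M, (forall w, w != Aal -> e1 w = e2 w) ->
  (sat e1 (bodyF phi psi n k k' PC PA PB PX PT) <-> sat e2 (bodyF phi psi n k k' PC PA PB PX PT)).
  move=> e1 e2 H12; rewrite !Hbody.
  have Hm : forall s0, (forall w, w \in s0 -> w != Aal) -> map e1 s0 = map e2 s0.
    by move=> s0 Hs0; apply/eq_in_map => w /Hs0; apply: H12.
  rewrite !Hm ?H12 //; try (by apply/eqP; lia); by move=> w; rewrite mem_iota => Hw; apply/eqP; lia.
have HN : forall x, upd e0 Xp x N = y by move=> x; rewrite /upd ifF ?Hy //; apply/eqP; lia.
have HXp : forall x, upd e0 Xp x Xp = x by move=> x; rewrite /upd eqxx.
rewrite satEx; split.
- case=> x; rewrite satAnd ltF_sem HN HXp ublock_sem ?size_iota; first last.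
  + exact: Hind.
  + rewrite mem_iota; lia.
  move=> [Hlt Hu]; exists x; split=> //.
  by apply: (unbounded_imp Hu) => s Hs; apply: HB.
- case=> x [Hlt Hu]; exists x; rewrite satAnd ltF_sem HN HXp ublock_sem ?size_iota; first last.
  + exact: Hind.
  + rewrite mem_iota; lia.
  split=> //; apply: (unbounded_imp Hu) => s Hs; symmetry; exact: HB.
Qed.


Lemma Forall_cat' {A : Type} (P : A -> Prop) (s1 s2 : seq A) :
  List.Forall P s1 -> List.Forall P s2 -> List.Forall P (s1 ++ s2).
Proof. by move=> H1 H2; apply/List.Forall_app. Qed.

Lemma Forall_nseq' {A : Type} (P : A -> Prop) (x : A) m : P x -> List.Forall P (nseq m x).
Proof. by move=> H; elim: m => //= m IH; constructor. Qed.

Theorem proposition2p2 (L : language) (T : theory L)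
  (HTs : theory_of_sentences T) (HTc : complete T) (HSk : has_skolem T)
  (Hlin : lin_order_theory T) (Hinacc : inaccessibility T)
  (M : structure L) (HM : models M T)
  (n k : nat) (psi : formula L) (Hpsi : fv_below psi (n + k))
  (b : seq M) (Hb : size b = k)
  (Hunb : unbounded n (fun xs => sat (env_of (xs ++ b)) psi))
  (k' : nat) (phi : formula L) (Hphi : fv_below phi (n + k')) (a : M) :
  exists c : seq M, size c = n /\
    unbounded n (fun xs => E_phi phi k' xs c a /\ sat (env_of (xs ++ b)) psi).
Proof.
have [Hirr [Htr Htot]] := Hlin M HM.
have [z1 [Haz1 Hz1]] := Hinacc n k' phi Hphi M HM a.
have Habove : (forall al : M, exists x, ltM al x) -> forall l : seq M, exists z, List.Forall (fun u => ltM u z) l.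
  move=> Hinf; elim=> [|u l [z Hz]]; first by exists (inhab M).
  case: (Htot u z) => [Huz|[Huz|Hzu]].
  - by exists z; constructor.
  - subst u; have [x Hx] := Hinf z; exists x; constructor => //.
    by apply: List.Forall_impl Hz => w Hw; apply: Htr Hx.
  - have [x Hx] := Hinf u; exists x; constructor => //.
    by apply: List.Forall_impl Hz => w Hw; apply: Htr (Htr _ _ _ Hw Hzu) Hx.
have Main : forall j p, size p + j = n -> unbounded j (fun s => sat (env_of ((p ++ s) ++ b)) psi) ->
  exists c, size c = n /\ List.Forall (fun u => ltM u z1) c /\
    unbounded j (fun s => E_phi phi k' (p ++ s) c a /\ sat (env_of ((p ++ s) ++ b)) psi).
  elim=> [|j IH] p Hsz Hu.
  - rewrite addn0 in Hsz.
    have [c [Hcs [HcF HcE]]] := Hz1 p Hsz.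
    exists c; split=> //; split=> //=; rewrite cats0; split=> //.
    by move: Hu => /=; rewrite cats0.
  case: (classic (exists c, size c = n /\ List.Forall (fun u => ltM u z1) c /\
    unbounded j.+1 (fun s => E_phi phi k' (p ++ s) c a /\ sat (env_of ((p ++ s) ++ b)) psi))) => // Hno.
  exfalso.
  have Hinf : forall al : M, exists x, ltM al x.
    by move=> al; have [x [Hx _]] := Hu al; exists x.
  have [z0 Hz0] := Habove Hinf (z1 :: b ++ p).
  have Hz10 : ltM z1 z0 by inversion Hz0.
  have Hbp0 : List.Forall (fun u => ltM u z0) (b ++ p) by inversion Hz0.
  set Th := Theta phi psi n k k' (size p) j.
  have [m Hm] := fv_bound Th.
  set K := maxn (n + k + size p + 1) m.
  set fill := nseq (K - (n + k + size p + 1)) a.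
  have HThK : fv_below Th (1 + K) by move=> v /Hm Hv; rewrite /K; lia.
  have [z2 [Hz02 Hz2]] := Hinacc 1 K Th HThK M HM z0.
  have [x1 [Hz2x1 Hu1]] := Hu z2.
  have [c0 [Hc0s [Hc0F Hc0U]]] : exists c, size c = n /\ List.Forall (fun u => ltM u z1) c /\
    unbounded j (fun s => E_phi phi k' ((p ++ [:: x1]) ++ s) c a /\
                          sat (env_of (((p ++ [:: x1]) ++ s) ++ b)) psi).
    apply: IH; first by rewrite size_cat /=; lia.
    by apply: (unbounded_imp Hu1) => s _; rewrite -!catA.
  have [al0 Hal0] : exists al, forall x, ltM al x -> ~ unbounded j
      (fun s => E_phi phi k' (p ++ x :: s) c0 a /\ sat (env_of ((p ++ x :: s) ++ b)) psi).
    apply: NNPP => Hn; apply: Hno; exists c0; split=> //; split=> // al.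
    apply: NNPP => Hn2; apply: Hn; exists al => x Hx Hux; apply: Hn2; exists x; split=> //.
  have [y1 [Hy1s [Hy1F HE]]] := Hz2 [:: al0] erefl.
  case: y1 Hy1s Hy1F HE => [|y1 [|]] //= _ Hy1F HE.
  have Hy1 : ltM y1 z2 by inversion Hy1F.
  have Hsem := Theta_sem (plen := size p) (j := j) (c := c0) (b := b) (p := p) y1 a fill Hphi Hpsi.
  have Hsem0 := Theta_sem (plen := size p) (j := j) (c := c0) (b := b) (p := p) al0 a fill Hphi Hpsi.
  have Hts : size (c0 ++ a :: b ++ p ++ fill) = K.
    rewrite size_cat /= size_cat size_cat size_nseq Hc0s Hb /K; lia.
  have HtsF : List.Forall (fun u => ltM u z0) (c0 ++ a :: b ++ p ++ fill).
    apply: Forall_cat'.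
      by apply: List.Forall_impl Hc0F => u Hu'; apply: Htr Hu' Hz10.
    constructor; first by apply: Htr Haz1 Hz10.
    rewrite catA; apply: Forall_cat' => //.
    by apply: Forall_nseq'; apply: Htr Haz1 Hz10.
  move: (HE _ Hts HtsF) => /= HE'.
  have Hsz' : size p + j.+1 = n by [].
  have : sat (env_of (y1 :: c0 ++ a :: b ++ p ++ fill)) Th.
    rewrite /Th Hsem //; exists x1; split; first by apply: Htr Hy1 Hz2x1.
    by apply: (unbounded_imp Hc0U) => s _; rewrite -catA; exact: iff_refl.
  rewrite -HE' /Th Hsem0 // => -[x [Hx Hux]].
  exact: (Hal0 x Hx Hux).
have [c [Hcs [_ Hc]]] := Main n [::] erefl Hunb.
by exists c.
Qed.
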